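(* Let $\mathbb{X}\subseteq\mathbb{P}^2$ be a $\Bbbk$-configuration of type $(1,2,\dots,s)$ with $s\ge2$, defined by subsets $\mathbb{X}_1,\dots,\mathbb{X}_s$ and lines $\mathbb{L}_1,\dots,\mathbb{L}_s$, with $\mathbb{X}_1=\{P\}$, and suppose that no line of $\mathbb{P}^2$ passing through $P$ contains $s$ points of $\mathbb{X}$. Suppose coordinates are chosen so that $P=[1:0:0]$ and $\mathbb{X}_2=\{[0:1:0],[0:0:1]\}$. Let $\mathbb{Y}=\mathbb{X}_2\cup\cdots\cup\mathbb{X}_s=\mathbb{X}\setminus\{P\}$. Then for all integers $m\ge s+1$, $\mathbf{H}_{R/(I_{m\mathbb{Y}}+I_P^m)}(ms-2)=0$, i.e. $(I_{m\mathbb{Y}}+I_P^m)_{ms-2}=R_{ms-2}$.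
   Context: $\Bbbk$ is an algebraically closed field and $R=\Bbbk[x_0,x_1,x_2]$. A $\Bbbk$-configuration of type $(d_1,\dots,d_s)$ is a finite set $\mathbb{X}\subseteq\mathbb{P}^2$ for which there exist integers $1\le d_1<\cdots<d_s$, subsets $\mathbb{X}_1,\dots,\mathbb{X}_s$ of $\mathbb{X}$ and distinct lines $\mathbb{L}_1,\dots,\mathbb{L}_s\subseteq\mathbb{P}^2$ such that (1) $\mathbb{X}=\bigcup_{i=1}^s\mathbb{X}_i$; (2) $|\mathbb{X}_i|=d_i$ and $\mathbb{X}_i\subseteq\mathbb{L}_i$ for each $i$; (3) for $1<i\le s$, $\mathbb{L}_i$ contains no point of $\mathbb{X}_j$ for any $j<i$. $I_P\subseteq R$ denotes the ideal of a point $P$ (so $I_{[1:0:0]}=\langle x_1,x_2\rangle$); for a finite set $\mathbb{Y}=\{Q_1,\dots,Q_n\}$, $I_{m\mathbb{Y}}=I_{Q_1}^m\cap\cdots\cap I_{Q_n}^m$. For a homogeneous ideal $I$, $\mathbf{H}_{R/I}(t)=\dim_\Bbbk R_t-\dim_\Bbbk I_t$. *)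

(* Defs.v *)
(* R = k[x0,x1,x2] is modelled as nested univariate
   polynomials {poly {poly {poly K}}}: innermost variable x0, then x1,
   outermost x2. *)
From HB Require Import structures.
From mathcomp Require Import all_boot all_order all_algebra all_field.
Set Implicit Arguments. Unset Strict Implicit. Unset Printing Implicit Defensive.
Import Order.TTheory GRing.Theory Num.Theory.
Local Open Scope ring_scope.

Section Defs.
Variable K : closedFieldType.

Definition mpoly := {poly {poly {poly K}}}.

Definition mcoef (p : mpoly) (i j k : nat) : K := ((p`_k)`_j)`_i.

(* p is a homogeneous form of degree d (0 counts as homogeneous) *)
Definition homog (d : nat) (p : mpoly) : Prop :=
  forall i j k, mcoef p i j k != 0 -> (i + j + k)%N = d.

(* homogeneous coordinates (q0,q1,q2) of a point of P^2 *)
Definition pt := (K * K * K)%type.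
Definition c0 (q : pt) := q.1.1.
Definition c1 (q : pt) := q.1.2.
Definition c2 (q : pt) := q.2.

Definition heval (q : pt) (p : mpoly) : K :=
  (p.[(c2 q)%:P%:P]).[(c1 q)%:P].[c0 q].

Definition nzpt (q : pt) : Prop := ~ (c0 q = 0 /\ c1 q = 0 /\ c2 q = 0).

Definition proj_eq (u v : pt) : Prop :=
  exists t : K, t != 0 /\ c0 u = t * c0 v /\ c1 u = t * c1 v /\ c2 u = t * c2 v.

Definition on_line (l q : pt) : bool :=
  c0 l * c0 q + c1 l * c1 q + c2 l * c2 q == 0.

Definition gen_ideal (S : mpoly -> Prop) (F : mpoly) : Prop :=
  exists s : seq (mpoly * mpoly),
    F = \sum_(x <- s) x.1 * x.2 /\ (forall x, x \in s -> S x.2).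

Definition ideal_pow (I : mpoly -> Prop) (m : nat) (F : mpoly) : Prop :=
  gen_ideal (fun g => exists fs : seq mpoly,
     size fs = m /\ (forall f, f \in fs -> I f) /\ g = \prod_(f <- fs) f) F.

Definition ideal_pt (q : pt) : mpoly -> Prop :=
  gen_ideal (fun h => exists d, homog d h /\ heval q h = 0).

Definition ideal_fat (m : nat) (Y : seq pt) (F : mpoly) : Prop :=
  forall q, q \in Y -> ideal_pow (ideal_pt q) m F.

Definition ideal_add (I J : mpoly -> Prop) (F : mpoly) : Prop :=
  exists A B, F = A + B /\ I A /\ J B.

Definition distinct_pts (xs : seq pt) : Prop :=
  (forall q, q \in xs -> nzpt q) /\
  (forall i j, (i < size xs)%N -> (j < size xs)%N -> i <> j ->
     ~ proj_eq (nth (0,0,0) xs i) (nth (0,0,0) xs j)).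

End Defs.

(* Main.v *)
Require Import Defs.
From HB Require Import structures.
From mathcomp Require Import all_boot all_order all_algebra all_field.
From mathcomp Require Import ring zify.
Import Order.TTheory GRing.Theory Num.Theory.
Local Open Scope ring_scope.
Set Implicit Arguments. Unset Strict Implicit. Unset Printing Implicit Defensive.

Section Work.
Variable K : closedFieldType.
Local Notation R := (mpoly K).

Definition x0 : R := ('X : {poly K})%:P%:P.
Definition x1 : R := ('X : {poly {poly K}})%:P.
Definition x2 : R := 'X.
Definition cst (a : K) : R := a%:P%:P%:P.
Definition lin (l : pt K) : R := cst (c0 l) * x0 + cst (c1 l) * x1 + cst (c2 l) * x2.
Definition mon (a b c : nat) : R := x0 ^+ a * x1 ^+ b * x2 ^+ c.

Lemma cstM a b : cst (a * b) = cst a * cst b.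
Proof. by rewrite /cst !polyCM. Qed.
Lemma cst1 : cst 1 = 1.
Proof. by rewrite /cst !polyC1. Qed.
Lemma cst0 : cst 0 = 0.
Proof. by rewrite /cst !polyC0. Qed.

Lemma heval_lin q l : heval q (lin l) = c0 l * c0 q + c1 l * c1 q + c2 l * c2 q.
Proof. by rewrite /heval /lin /cst /x0 /x1 /x2 !hornerE. Qed.



Lemma homog_lin l : homog 1 (lin l).
Proof.
move=> i j k; rewrite /mcoef /lin /cst /x0 /x1 /x2.
rewrite !coefD !coefCM coefX !coefC.
case: k => [|[|k]] /=; rewrite ?coef0 ?coef1 ?coefC ?coefX ?coef0;
 case: j => [|[|j]] /=; rewrite ?coef0 ?coef1 ?coefC ?coefX ?coef0;
 case: i => [|[|i]] /=; rewrite ?mulr0 ?mulr1 ?addr0 ?add0r ?eqxx //.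
Qed.

Lemma gi0 (S : R -> Prop) : gen_ideal S 0.
Proof. by exists [::]; split; [rewrite big_nil|]. Qed.
Lemma giD (S : R -> Prop) A B : gen_ideal S A -> gen_ideal S B -> gen_ideal S (A + B).
Proof.
move=> [s1 [-> H1]] [s2 [-> H2]]; exists (s1 ++ s2); split; first by rewrite big_cat.
by move=> x; rewrite mem_cat => /orP[/H1|/H2].
Qed.
Lemma giM (S : R -> Prop) r A : gen_ideal S A -> gen_ideal S (r * A).
Proof.
move=> [s [-> H]]; exists [seq (r * x.1, x.2) | x <- s]; split.
  by rewrite big_map mulr_sumr; apply: eq_bigr => x _ /=; rewrite mulrA.
by move=> x /mapP [y ys ->] /=; apply: H.
Qed.
Lemma gigen (S : R -> Prop) r g : S g -> gen_ideal S (r * g).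
Proof.
by move=> Sg; exists [:: (r, g)]; split; [rewrite big_seq1 | move=> x; rewrite inE => /eqP ->].
Qed.
Lemma gi_sub (S : R -> Prop) (I : R -> Prop) : I 0 ->
  (forall A B, I A -> I B -> I (A + B)) -> (forall r A, I A -> I (r * A)) ->
  (forall g, S g -> I g) -> forall A, gen_ideal S A -> I A.
Proof.
move=> I0 ID IM IS A [s [-> H]]; elim: s H => [|x s IH] H; first by rewrite big_nil.
rewrite big_cons; apply: ID.
  by apply: IM; apply: IS; apply: H; rewrite inE eqxx.
by apply: IH => y ys; apply: H; rewrite inE ys orbT.
Qed.
Lemma giprod (S T U : R -> Prop) A B : gen_ideal S A -> gen_ideal T B ->
  (forall x y, S x -> T y -> U (x * y)) -> gen_ideal U (A * B).
Proof.
move=> HA HB HU; apply: (@gi_sub S (fun A => gen_ideal U (A * B))) HA.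
- by rewrite mul0r; apply: gi0.
- by move=> A1 A2 h1 h2; rewrite mulrDl; apply: giD.
- by move=> r A1 h; rewrite -mulrA; apply: giM.
- move=> x Sx; apply: (@gi_sub T (fun B => gen_ideal U (x * B))) HB.
  + by rewrite mulr0; apply: gi0.
  + by move=> B1 B2 h1 h2; rewrite mulrDr; apply: giD.
  + by move=> r B1 h; rewrite mulrCA; apply: giM.
  + by move=> y Ty; rewrite -[x * y]mul1r; apply: gigen; apply: HU.
Qed.
Lemma giB (S : R -> Prop) A B : gen_ideal S A -> gen_ideal S B -> gen_ideal S (A - B).
Proof. by move=> hA hB; apply: giD => //; rewrite -mulN1r; apply: giM. Qed.

Definition Mon (e o : nat) : R -> Prop :=
  gen_ideal (fun g => exists a b c, [/\ (a + b + c = e)%N, (o <= b + c)%N & g = mon a b c]).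

Lemma monM a b c a' b' c' : mon a b c * mon a' b' c' = mon (a + a') (b + b') (c + c').
Proof. rewrite /mon !exprD; ring. Qed.

Lemma Mon_mon a b c : Mon (a + b + c) (b + c) (mon a b c).
Proof. by rewrite -[mon a b c]mul1r; apply: gigen; exists a, b, c. Qed.

Lemma Mon_cast e o e' o' A : e = e' -> o = o' -> Mon e o A -> Mon e' o' A.
Proof. by move=> -> ->. Qed.

Lemma MonM e o e' o' A B : Mon e o A -> Mon e' o' B -> Mon (e + e') (o + o') (A * B).
Proof.
move=> hA hB; apply: (giprod hA hB) => x y [a [b [c [h1 h2 ->]]]] [a' [b' [c' [h1' h2' ->]]]].
by exists (a + a'), (b + b'), (c + c'); split; [lia|lia|rewrite monM].
Qed.

Lemma Mon_weak e o o' A : (o' <= o)%N -> Mon e o A -> Mon e o' A.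
Proof.
move=> h; apply: gi_sub; [exact: gi0|exact: giD|exact: giM|].
move=> g [a [b [c [h1 h2 ->]]]]; rewrite -[mon a b c]mul1r; apply: gigen.
by exists a, b, c; split => //; lia.
Qed.

Lemma Mon_cst a : Mon 0 0 (cst a).
Proof.
have -> : cst a = cst a * mon 0 0 0 by rewrite /mon !expr0 !mulr1.
by apply: giM; apply: (@Mon_mon 0 0 0).
Qed.

Lemma x0_mon p : x0 ^+ p = mon p 0 0.
Proof. by rewrite /mon !expr0 !mulr1. Qed.

Definition Lead (p : nat) (al : K) (A : R) := Mon p 1 (A - cst al * x0 ^+ p).

Lemma Lead_Mon0 p al A : Lead p al A -> Mon p 0 A.
Proof.
move=> h; have -> : A = (A - cst al * x0 ^+ p) + cst al * x0 ^+ p by rewrite subrK.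
apply: giD; first exact: Mon_weak h.
by apply: giM; rewrite x0_mon; have := Mon_mon p 0 0; rewrite !addn0.
Qed.

Lemma Lead_lin l : Lead 1 (c0 l) (lin l).
Proof.
rewrite /Lead /lin.
have -> : cst (c0 l) * x0 + cst (c1 l) * x1 + cst (c2 l) * x2 - cst (c0 l) * x0 ^+ 1
  = cst (c1 l) * x1 + cst (c2 l) * x2 by rewrite expr1; ring.
apply: giD; apply: giM.
  by have := Mon_mon 0 1 0; rewrite /mon !expr0 !mulr1 mul1r expr1.
by have := Mon_mon 0 0 1; rewrite /mon !expr0 !mulr1 mul1r expr1.
Qed.

Lemma Lead_mul p q al be A B : Lead p al A -> Lead q be B -> Lead (p + q) (al * be) (A * B).
Proof.
move=> hA hB; rewrite /Lead.
have -> : A * B - cst (al * be) * x0 ^+ (p + q) =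
   (A - cst al * x0 ^+ p) * B + (cst al * x0 ^+ p) * (B - cst be * x0 ^+ q).
  by rewrite cstM exprD; ring.
apply: giD.
  by have := MonM hA (Lead_Mon0 hB); rewrite addn0.
rewrite -mulrA; apply: giM; have := MonM (Mon_mon p 0 0) hB; rewrite !addn0 add0n.
by rewrite -x0_mon.
Qed.

Lemma Lead1 : Lead 0 1 1.
Proof. by rewrite /Lead cst1 expr0 mulr1 subrr; apply: gi0. Qed.

Lemma Lead_exp p al A n : Lead p al A -> Lead (p * n) (al ^+ n) (A ^+ n).
Proof.
move=> h; elim: n => [|n IH]; first by rewrite muln0 !expr0; exact: Lead1.
by rewrite mulnS !exprS; apply: Lead_mul.
Qed.

Lemma Lead_prod (r : seq nat) (f : nat -> R) (e : nat -> nat) (al : nat -> K) :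
  (forall i, i \in r -> Lead (e i) (al i) (f i)) ->
  Lead (\sum_(i <- r) e i) (\prod_(i <- r) al i) (\prod_(i <- r) f i).
Proof.
elim: r => [|x r IH] h; first by rewrite !big_nil; exact: Lead1.
rewrite !big_cons; apply: Lead_mul; first by apply: h; rewrite inE eqxx.
by apply: IH => i ir; apply: h; rewrite inE ir orbT.
Qed.

Lemma expand (F : R) : F = \sum_(k < size F) \sum_(j < size F`_k)
   \sum_(i < size F`_k`_j) cst (mcoef F i j k) * mon i j k.
Proof.
rewrite -{1}[F]coefK poly_def; apply: eq_bigr => k _.
rewrite -mul_polyC -{1}[F`_k]coefK poly_def rmorph_sum mulr_suml; apply: eq_bigr => j _.
rewrite -mul_polyC !rmorphM -{1}[F`_k`_j]coefK poly_def !rmorph_sum !mulr_suml; apply: eq_bigr => i _.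
rewrite -mul_polyC /cst /mon /mcoef /x0 /x1 /x2 !rmorphM !rmorphXn /=.
ring.
Qed.

Lemma homog_Mon d (F : R) : homog d F -> Mon d 0 F.
Proof.
move=> hF; rewrite (expand F).
apply: big_ind => [|A B|k _]; [exact: gi0|exact: giD|].
apply: big_ind => [|A B|j _]; [exact: gi0|exact: giD|].
apply: big_ind => [|A B|i _]; [exact: gi0|exact: giD|].
have [->|h] := eqVneq (mcoef F i j k) 0; first by rewrite cst0 mul0r; exact: gi0.
apply: giM; apply: (@Mon_weak d (j + k)) => //.
by apply: (Mon_cast _ _ (Mon_mon i j k)) => //; rewrite (hF _ _ _ h).
Qed.

Lemma pt_lin q l : heval q (lin l) = 0 -> ideal_pt q (lin l).
Proof.
move=> h; rewrite -[lin l]mul1r; apply: gigen; exists 1%N; split; [exact: homog_lin | exact: h].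
Qed.

Lemma prod_nseq (f : R) n : \prod_(g <- nseq n f) g = f ^+ n.
Proof. by elim: n => [|n IH]; rewrite ?big_nil ?expr0 // big_cons IH exprS. Qed.

Lemma pow_mem2 q (f g r : R) m : (0 < m)%N -> ideal_pt q f -> ideal_pt q g ->
  ideal_pow (ideal_pt q) m (r * g * f ^+ (m - 1)).
Proof.
move=> hm hf hg; rewrite -mulrA /ideal_pow; apply: gigen.
exists (g :: nseq (m - 1) f); split; first by rewrite /= size_nseq; lia.
split; last by rewrite big_cons prod_nseq.
by move=> h; rewrite inE mem_nseq => /orP[/eqP->|/andP[_ /eqP->]].
Qed.

Lemma prod_mem (T : eqType) (f : T -> R) (r : seq T) x : x \in r ->
  exists Rr, \prod_(y <- r) f y = f x * Rr.
Proof.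
elim: r => [|y r IH] //; rewrite inE big_cons => /orP[/eqP->|/IH [Rr ->]].
  by exists (\prod_(j <- r) f j).
by exists (f y * Rr); rewrite mulrCA.
Qed.

Lemma cst_unit a A : a != 0 -> A = cst a^-1 * (cst a * A).
Proof. by move=> h; rewrite mulrA -cstM mulVf // cst1 mul1r. Qed.

Lemma Mon_exp (u : R) n : Mon 1 1 u -> Mon n n (u ^+ n).
Proof.
move=> hu; elim: n => [|n IH]; first by rewrite expr0 -cst1; exact: Mon_cst.
by rewrite exprS; apply: (Mon_cast _ _ (MonM hu IH)).
Qed.

Lemma Mon_x1 : Mon 1 1 x1.
Proof. by have := Mon_mon 0 1 0; rewrite /mon !expr0 mul1r mulr1 expr1. Qed.
Lemma Mon_x2 : Mon 1 1 x2.
Proof. by have := Mon_mon 0 0 1; rewrite /mon !expr0 !mul1r expr1. Qed.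

Definition XL (u v : R) (n : nat) (ga : K) (A : R) :=
  exists B, Mon n n B /\ A = cst ga * u ^+ n.+1 + v * B.

Lemma XL_mul u v n n' ga ga' A A' : Mon 1 1 u -> Mon 1 1 v ->
  XL u v n ga A -> XL u v n' ga' A' -> XL u v (n + n').+1 (ga * ga') (A * A').
Proof.
move=> hu hv [B [hB ->]] [B' [hB' ->]].
exists (cst ga * (u ^+ n.+1 * B') + cst ga' * (u ^+ n'.+1 * B) + v * B * B'); split.
  apply: giD; first apply: giD.
  - by apply: giM; apply: (Mon_cast _ _ (MonM (Mon_exp n.+1 hu) hB')); rewrite addSn.
  - by apply: giM; apply: (Mon_cast _ _ (MonM (Mon_exp n'.+1 hu) hB)); rewrite addSn addnC.
  - by apply: (Mon_cast _ _ (MonM (MonM hv hB) hB')).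
have -> : u ^+ (n + n').+2 = u ^+ n.+1 * u ^+ n'.+1 by rewrite -exprD addSn addnS.
rewrite cstM; ring.
Qed.

Definition lQ (Q : pt K) : R := lin (0, - c2 Q, c1 Q).

Lemma XL_lQ1 Q : XL x1 x2 0 (- c2 Q) (lQ Q).
Proof.
exists (cst (c1 Q)); split; first exact: Mon_cst.
by rewrite /lQ /lin /c0 /c1 /c2 /= cst0 expr1; ring.
Qed.
Lemma XL_lQ2 Q : XL x2 x1 0 (c1 Q) (lQ Q).
Proof.
exists (cst (- c2 Q)); split; first exact: Mon_cst.
by rewrite /lQ /lin /c0 /c1 /c2 /= cst0 expr1; ring.
Qed.

Lemma XL_prod (u v : R) (f : pt K -> R) (ga : pt K -> K) q0 r :
  Mon 1 1 u -> Mon 1 1 v -> (forall q, XL u v 0 (ga q) (f q)) ->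
  XL u v (size r) (\prod_(q <- q0 :: r) ga q) (\prod_(q <- q0 :: r) f q).
Proof.
move=> hu hv h; elim: r q0 => [|q1 r IH] q0; first by rewrite !big_seq1.
by rewrite big_cons [X in XL _ _ _ _ X]big_cons; have := XL_mul hu hv (h q0) (IH q1); rewrite add0n.
Qed.

Lemma sum_sub (f : pred nat) (r : seq nat) m : (0 < m)%N ->
  (\sum_(i <- r) (m - f i) + count f r = m * size r)%N.
Proof.
move=> hm; elim: r => [|x r IH]; first by rewrite big_nil muln0.
rewrite big_cons /= mulnS; move: IH; case: (f x) => /=; lia.
Qed.

Lemma size_sumn (T : eqType) (g : T -> nat) (r : seq T) :
  (forall x, x \in r -> 0 < g x)%N -> (size r <= sumn (map g r))%N.
Proof.
elim: r => [|x r IH] //= h.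
have := h x (mem_head _ _); have := IH (fun y yr => h y (mem_behead (s:=x :: r) yr)); lia.
Qed.
End Work.

Section Main.
Variable K : closedFieldType.
Local Notation R := (mpoly K).
Local Notation mon := (@mon K).
Local Notation x0 := (@x0 K).
Local Notation x1 := (@x1 K).
Local Notation x2 := (@x2 K).
Local Notation cst := (@cst K).
Local Notation lin := (@lin K).
Local Notation Mon := (@Mon K).
Local Notation Lead := (@Lead K).
Local Notation XL := (@XL K).
Local Notation lQ := (@lQ K).
Local Notation Mon_mon := (@Mon_mon K).
Local Notation x0_mon := (@x0_mon K).
Local Notation cst0 := (@cst0 K).
Local Notation cst1 := (@cst1 K).
Local Notation Mon_x1 := (@Mon_x1 K).
Local Notation Mon_x2 := (@Mon_x2 K).
Local Notation monM := (@monM K).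
Variables (s : nat) (Xs : nat -> seq (pt K)) (L : nat -> pt K) (P : pt K) (m : nat).
Hypothesis hs : (2 <= s)%N.
Hypothesis hm : (s + 1 <= m)%N.
Hypothesis hsize : forall i, (1 <= i <= s)%N -> size (Xs i) = i.
Hypothesis hon : forall i q, (1 <= i <= s)%N -> q \in Xs i -> on_line (L i) q.
Hypothesis hnot : forall i j q, (1 < i <= s)%N -> (1 <= j < i)%N -> q \in Xs j -> ~~ on_line (L i) q.
Hypothesis hX1 : Xs 1%N = [:: P].
Hypothesis hP : proj_eq P (1, 0, 0).
Hypothesis he1 : exists2 q, q \in Xs 2%N & proj_eq q (0, 1, 0).
Hypothesis he2 : exists2 q, q \in Xs 2%N & proj_eq q (0, 0, 1).
Hypothesis hline : forall l : pt K, nzpt l -> on_line l P ->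
  (count (on_line l) (flatten [seq Xs i | i <- iota 1 s]) < s)%N.

Definition Y := flatten [seq Xs i | i <- iota 2 s.-1].
Definition J := ideal_add (ideal_fat m Y) (ideal_pow (ideal_pt P) m).

Lemma hm0 : (0 < m)%N. Proof. lia. Qed.

Lemma J0 : J 0.
Proof. by exists 0, 0; split; [rewrite addr0 | split; [move=> q _; exact: gi0 | exact: gi0]]. Qed.
Lemma JD A B : J A -> J B -> J (A + B).
Proof.
move=> [A1 [A2 [-> [h1 h2]]]] [B1 [B2 [-> [h1' h2']]]].
exists (A1 + B1), (A2 + B2); split; first by rewrite addrACA.
by split; [move=> q hq; apply: giD; [apply: h1|apply: h1'] | apply: giD].
Qed.
Lemma JM r A : J A -> J (r * A).
Proof.
move=> [A1 [A2 [-> [h1 h2]]]]; exists (r * A1), (r * A2); split; first by rewrite mulrDr.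
by split; [move=> q hq; apply: giM; apply: h1 | apply: giM].
Qed.
Lemma JB A B : J A -> J B -> J (A - B).
Proof. by move=> hA hB; apply: JD => //; rewrite -mulN1r; apply: JM. Qed.
Lemma J_gen (S : R -> Prop) A : (forall g, S g -> J g) -> gen_ideal S A -> J A.
Proof. by move=> h; apply: gi_sub => //; [exact: J0 | exact: JD | exact: JM]. Qed.
Lemma J_unit a A : a != 0 -> J (cst a * A) -> J A.
Proof. by move=> ha hA; rewrite (cst_unit A ha); apply: JM. Qed.
Lemma J_P A : ideal_pow (ideal_pt P) m A -> J A.
Proof. by move=> h; exists 0, A; split; [rewrite add0r | split => //; move=> q _; exact: gi0]. Qed.
Lemma J_fat F : (forall q, q \in Y -> exists r f g, [/\ ideal_pt q f, ideal_pt q g &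
  F = r * g * f ^+ (m - 1)]) -> J F.
Proof.
move=> h; exists F, 0; split; first by rewrite addr0.
split; last exact: gi0.
by move=> q /h [r [f [g [hf hg ->]]]]; apply: pow_mem2 => //; exact: hm0.
Qed.

Lemma Pc : [/\ c0 P != 0, c1 P = 0 & c2 P = 0].
Proof.
case: hP => t [ht [h0 [h1 h2]]]; rewrite h0 h1 h2 /c0 /c1 /c2 /= mulr1 mulr0.
by split.
Qed.

Lemma LP i : (2 <= i <= s)%N -> c0 (L i) != 0.
Proof.
move=> hi; have := hnot (i := i) (j := 1) (q := P); rewrite hX1 mem_head.
case: Pc => hP0 hP1 hP2.
move=> /(_ ltac:(lia) ltac:(lia) isT); rewrite /on_line hP1 hP2 !mulr0 !addr0.
by rewrite mulf_eq0 negb_or => /andP[].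
Qed.

Lemma X2 q : q \in Xs 2%N -> (c0 q = 0 /\ c2 q = 0) \/ (c0 q = 0 /\ c1 q = 0).
Proof.
move=> hq.
case: he1 => q1 hq1 [t1 [ht1 [a0 [a1 a2]]]].
case: he2 => q2 hq2 [t2 [ht2 [b0 [b1 b2]]]].
move: a0 a1 a2 b0 b1 b2; rewrite /c0 /c1 /c2 /= !mulr0 !mulr1 => a0 a1 a2 b0 b1 b2.
have hne : q1 != q2.
  by apply/eqP => e; move: a1; rewrite e b1 => /esym/eqP; rewrite (negPf ht1).
have hs2 : size (Xs 2%N) = 2%N by apply: hsize; lia.
have : q = q1 \/ q = q2.
  move: hq hq1 hq2 hne hs2; case: (Xs 2%N) => [|a [|b [|c r]]] //=; rewrite !inE.
  by move=> /orP[/eqP->|/eqP->] /orP[/eqP->|/eqP->] /orP[/eqP->|/eqP->]; rewrite ?eqxx // => *;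
    by [left|right].
by case=> ->; [left|right]; split.
Qed.

Lemma layerY q : q \in Y -> exists2 i, (2 <= i <= s)%N & q \in Xs i.
Proof.
by move=> /flatten_mapP [i]; rewrite mem_iota => hi hq; exists i => //; lia.
Qed.

Lemma findk (l : pt K) : nzpt l -> on_line l P -> has (on_line l) (Xs 2%N) ->
  exists k, [/\ (3 <= k <= s)%N & forall Q, Q \in Xs k -> ~~ on_line l Q].
Proof.
move=> hl hlP h2.
case E: (has (fun k => all (fun Q => ~~ on_line l Q) (Xs k)) (iota 3 (s - 2))).
  move/hasP: E => [k]; rewrite mem_iota => hk /allP hall.
  by exists k; split => //; lia.
exfalso; have := hline hl hlP; rewrite count_flatten -map_comp.
rewrite ltnNge => /negP; apply.
rewrite -{1}(size_iota 1 s); apply: size_sumn => i; rewrite mem_iota => hi /=; rewrite -has_count.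
have [->|i1] := eqVneq i 1%N; first by rewrite hX1 /= hlP.
have [->|i2] := eqVneq i 2%N; first by [].
move/hasPn: E => /(_ i); rewrite mem_iota => /(_ ltac:(lia)).
by move=> /allPn [Q hQ /negPn hQl]; apply/hasP; exists Q.
Qed.


Lemma pow_mem3 q (f g r : R) b : ideal_pt q f -> ideal_pt q g -> (b <= m)%N ->
  ideal_pow (ideal_pt q) m (r * f ^+ b * g ^+ (m - b)).
Proof.
move=> hf hg hb; rewrite -mulrA /ideal_pow; apply: gigen.
exists (nseq b f ++ nseq (m - b) g); split; first by rewrite size_cat !size_nseq; lia.
split; last by rewrite big_cat !prod_nseq.
by move=> h; rewrite mem_cat !mem_nseq => /orP[/andP[_ /eqP->]|/andP[_ /eqP->]].
Qed.

Lemma powm (f : R) : f ^+ m = f * f ^+ (m - 1).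
Proof. by rewrite -exprS; congr (_ ^+ _); have := hm0; lia. Qed.

Lemma hms : (m * s = m * s.-1 + m)%N.
Proof. by rewrite -mulnSr prednK //; lia. Qed.
Lemma hms1 : (m <= m * s.-1)%N.
Proof. by apply: leq_pmulr; lia. Qed.

Definition Gp (e : nat -> nat) : R := \prod_(i <- iota 2 s.-1) lin (L i) ^+ e i.

Lemma Gp_lead e : Lead (\sum_(i <- iota 2 s.-1) e i)
  (\prod_(i <- iota 2 s.-1) c0 (L i) ^+ e i) (Gp e).
Proof. by apply: Lead_prod => i _; have := Lead_exp (e i) (Lead_lin (L i)); rewrite mul1n. Qed.

Lemma Gp_al e : \prod_(i <- iota 2 s.-1) c0 (L i) ^+ e i != 0.
Proof.
rewrite prodf_seq_neq0; apply/allP => i; rewrite mem_iota => hi /=.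
by rewrite expf_neq0 // LP //; lia.
Qed.

Lemma Gp_split e i : (2 <= i <= s)%N -> exists Rr, Gp e = lin (L i) ^+ e i * Rr.
Proof.
move=> hi; apply: (@prod_mem _ _ (fun i => lin (L i) ^+ e i)).
by rewrite mem_iota; lia.
Qed.

Lemma van_L i q : (2 <= i <= s)%N -> q \in Xs i -> ideal_pt q (lin (L i)).
Proof. by move=> hi hq; apply: pt_lin; rewrite heval_lin; apply/eqP; apply: hon hq; lia. Qed.

Lemma x1_lin : x1 = lin (0, 1, 0).
Proof. by rewrite /lin /c0 /c1 /c2 /= cst0 cst1; ring. Qed.
Lemma x2_lin : x2 = lin (0, 0, 1).
Proof. by rewrite /lin /c0 /c1 /c2 /= cst0 cst1; ring. Qed.

Lemma van_x1 q : c1 q = 0 -> ideal_pt q x1.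
Proof.
move=> h; rewrite x1_lin; apply: pt_lin; rewrite heval_lin h.
by rewrite /c0 /c1 /c2 /=; ring.
Qed.
Lemma van_x2 q : c2 q = 0 -> ideal_pt q x2.
Proof.
move=> h; rewrite x2_lin; apply: pt_lin; rewrite heval_lin h.
by rewrite /c0 /c1 /c2 /=; ring.
Qed.
Lemma van_lQ Q : ideal_pt Q (lQ Q).
Proof. by apply: pt_lin; rewrite heval_lin /c0 /c1 /c2 /=; ring. Qed.

Definition M1 (Q : pt K) : pt K := (c2 Q, 0, - c0 Q).
Definition M2 (Q : pt K) : pt K := (c1 Q, - c0 Q, 0).
Lemma van_M1 Q q : (q = Q) \/ (c0 q = 0 /\ c2 q = 0) -> ideal_pt q (lin (M1 Q)).
Proof.
move=> h; apply: pt_lin; rewrite heval_lin.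
case: h => [->|[h0 h2]]; first by rewrite /M1 /c0 /c1 /c2 /=; ring.
by rewrite h0 h2 /M1 /c0 /c1 /c2 /=; ring.
Qed.
Lemma van_M2 Q q : (q = Q) \/ (c0 q = 0 /\ c1 q = 0) -> ideal_pt q (lin (M2 Q)).
Proof.
move=> h; apply: pt_lin; rewrite heval_lin.
case: h => [->|[h0 h1]]; first by rewrite /M2 /c0 /c1 /c2 /=; ring.
by rewrite h0 h1 /M2 /c0 /c1 /c2 /=; ring.
Qed.

Lemma on_line001 (q : pt K) : on_line ((0, 0, 1) : pt K) q = (c2 q == 0).
Proof. by rewrite /on_line /c0 /c1 /c2 /= !mul0r !add0r mul1r. Qed.
Lemma on_line010 (q : pt K) : on_line ((0, 1, 0) : pt K) q = (c1 q == 0).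
Proof. by rewrite /on_line /c0 /c1 /c2 /= !mul0r add0r addr0 mul1r. Qed.

Lemma extract A A' H p al ga a b c e o : Mon e o A -> A = cst ga * mon a b c + A' ->
  J (x0 ^+ p * A') -> Lead p al H -> al != 0 -> ga != 0 ->
  (forall Z, Mon (e + p) (o + 1) Z -> J Z) -> J (A * H) -> J (mon (a + p) b c).
Proof.
move=> hA eA hA' hH hal hga hZ hAH.
apply: (@J_unit (al * ga)); first by rewrite mulf_neq0.
have -> : cst (al * ga) * mon (a + p) b c =
    A * H - A * (H - cst al * x0 ^+ p) - cst al * (x0 ^+ p * A').
  by rewrite eA cstM /mon exprD; ring.
apply: JB; last by apply: JM.
by apply: JB => //; apply: hZ; apply: MonM.
Qed.

Lemma S_high a b c : (m <= b + c)%N -> J (mon a b c).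
Proof.
move=> h; apply: J_P.
set b0 := minn b m.
have hb0 : [/\ (b0 <= b)%N, (b0 <= m)%N & (m - b0 <= c)%N] by rewrite /b0; split; lia.
clearbody b0; case: hb0 => h1 h2 h3.
have [b1 ->] : exists b1, b = (b1 + b0)%N by exists (b - b0)%N; lia.
have [c1 ->] : exists c1, c = (c1 + (m - b0))%N by exists (c - (m - b0))%N; lia.
have -> : mon a (b1 + b0) (c1 + (m - b0)) =
  (x0 ^+ a * x1 ^+ b1 * x2 ^+ c1) * x1 ^+ b0 * x2 ^+ (m - b0) by rewrite /mon !exprD; ring.
by case: Pc => _ h1P h2P; apply: pow_mem3 => //; [apply: van_x1 | apply: van_x2].
Qed.

Lemma J_Mon e o A : (m <= o)%N -> Mon e o A -> J A.
Proof.
move=> ho; apply: J_gen => g [a [b [c [_ h ->]]]]; apply: S_high; lia.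
Qed.


Lemma S_mixed b c : (1 <= b)%N -> (1 <= c)%N -> (b + c = m - 1)%N ->
  J (mon (m * s.-1 - 1) b c).
Proof.
move=> hb hc hbc.
have hL := Gp_lead (fun i => m - pred1 2%N i)%N.
have hal := Gp_al (fun i => m - pred1 2%N i)%N.
have hsum : (\sum_(i <- iota 2 s.-1) (m - pred1 2%N i) = m * s.-1 - 1)%N.
  have := sum_sub (pred1 2%N) (iota 2 s.-1) hm0.
  rewrite (count_uniq_mem _ (iota_uniq _ _)) mem_iota size_iota.
  have := hms1; have : (2 <= 2 < 2 + s.-1)%N by lia.
  by move=> ->; rewrite /=; lia.
rewrite hsum in hL.
have := @extract (mon 0 b c) 0 _ _ _ 1 0 b c (0 + b + c)%N (b + c)%N (Mon_mon 0 b c) _ _ hL hal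
  (oner_neq0 _) _ _; rewrite add0n; apply.
- by rewrite cst1 mul1r addr0.
- by rewrite mulr0; exact: J0.
- by move=> Z; apply: J_Mon; lia.
apply: J_fat => q /layerY [i hi hq].
have [Rr ->] := Gp_split (fun i => m - pred1 2%N i)%N hi.
have [ei|ne] := eqVneq i 2%N.
  subst i; rewrite /=.
  case: (X2 hq) => [[q0 q2]|[q0 q1]].
    exists (x1 ^+ b * x2 ^+ c.-1 * Rr), (lin (L 2%N)), x2; split.
    - by apply: van_L.
    - exact: van_x2.
    rewrite /mon; have -> : x2 ^+ c = x2 * x2 ^+ c.-1 by rewrite -exprS prednK.
    ring.
  exists (x1 ^+ b.-1 * x2 ^+ c * Rr), (lin (L 2%N)), x1; split.
  - by apply: van_L.
  - exact: van_x1.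
  rewrite /mon; have -> : x1 ^+ b = x1 * x1 ^+ b.-1 by rewrite -exprS prednK.
  ring.
rewrite /= (negPf ne) subn0.
exists (mon 0 b c * Rr), (lin (L i)), (lin (L i)); split; [exact: van_L|exact: van_L|].
by rewrite powm; ring.
Qed.


Lemma sum2 k : (3 <= k <= s)%N ->
  (1 + \sum_(i <- iota 2 s.-1) (m - predU (pred1 2%N) (pred1 k) i) = m * s.-1 - 1)%N.
Proof.
move=> hk.
have := sum_sub (predU (pred1 2%N) (pred1 k)) (iota 2 s.-1) hm0.
have := count_predUI (pred1 2%N) (pred1 k) (iota 2 s.-1).
rewrite !(count_uniq_mem _ (iota_uniq _ _)) !mem_iota size_iota.
have -> : count (predI (pred1 2%N) (pred1 k)) (iota 2 s.-1) = 0%N.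
  rewrite (@eq_count _ _ pred0) ?count_pred0 // => i /=.
  by apply/andP => -[/eqP-> /eqP]; lia.
have := hms1; have -> : (2 <= 2 < 2 + s.-1)%N by lia.
have -> : (2 <= k < 2 + s.-1)%N by lia.
by rewrite /=; lia.
Qed.

Lemma nz001 : nzpt ((0, 0, 1) : pt K).
Proof. by rewrite /nzpt /c0 /c1 /c2 /= => -[_ [_ /eqP]]; rewrite oner_eq0. Qed.
Lemma nz010 : nzpt ((0, 1, 0) : pt K).
Proof. by rewrite /nzpt /c0 /c1 /c2 /= => -[_ [/eqP]]; rewrite oner_eq0. Qed.

Lemma split_k k : (3 <= k <= s)%N ->
  exists Q1 q0 r0, Xs k = [:: Q1, q0 & r0] /\ size r0 = (k - 2)%N.
Proof.
move=> hk; have := hsize (i := k) ltac:(lia).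
case: (Xs k) => [|a [|b r]] /= hs'; [lia|lia|].
by exists a, b, r; split => //; lia.
Qed.

Lemma S_pure1 : J (mon (m * s.-1 - 1) (m - 1) 0).
Proof.
have HP1 : on_line ((0, 0, 1) : pt K) P by rewrite on_line001; case: Pc => _ _ ->.
have HP2 : has (on_line ((0, 0, 1) : pt K)) (Xs 2%N).
  case: he1 => q1 hq1 [t [_ [_ [_ h2]]]]; apply/hasP; exists q1 => //.
  by rewrite on_line001 h2 /c2 /= mulr0.
have [k [hk hQ]] := findk nz001 HP1 HP2.
have [Q1 [q0 [r0 [Ek hr0]]]] := split_k hk.
have hc2 Q : Q \in Xs k -> c2 Q != 0 by move=> /hQ; rewrite on_line001.
have [B [hB eP]] := XL_prod (f := lQ) (ga := fun Q => - c2 Q) q0 r0 Mon_x1 Mon_x2 (@XL_lQ1 K).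
set ga := \prod_(q <- q0 :: r0) - c2 q in eP.
have hga : ga != 0.
  rewrite prodf_seq_neq0; apply/allP => Q hQ' /=; rewrite oppr_eq0 hc2 //.
  by rewrite Ek inE hQ' orbT.
set A := x1 ^+ (m - k) * \prod_(q <- q0 :: r0) lQ q.
set A' := x1 ^+ (m - k) * (x2 * B).
have eA : A = cst ga * mon 0 (m - 1) 0 + A'.
  rewrite /A /A' eP /mon.
  have -> : x1 ^+ (m - 1) = x1 ^+ (m - k) * x1 ^+ (size r0).+1 by rewrite -exprD; congr (_ ^+ _); lia.
  ring.
have hA : Mon (m - 1) (m - 1) A.
  rewrite eA; apply: giD.
    by apply: giM; apply: (Mon_cast _ _ (Mon_mon 0 (m - 1) 0)); lia.
  by apply: (Mon_cast _ _ (MonM (Mon_exp (m - k) Mon_x1) (MonM Mon_x2 hB))); lia.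
set H2 := lin (M1 Q1) * Gp (fun i => m - predU (pred1 2%N) (pred1 k) i)%N.
have hL : Lead (m * s.-1 - 1) (c0 (M1 Q1) * \prod_(i <- iota 2 s.-1)
     c0 (L i) ^+ (m - predU (pred1 2%N) (pred1 k) i)) H2.
  by rewrite -(sum2 hk); apply: Lead_mul; [exact: Lead_lin | exact: Gp_lead].
have hal : c0 (M1 Q1) * \prod_(i <- iota 2 s.-1)
     c0 (L i) ^+ (m - predU (pred1 2%N) (pred1 k) i) != 0.
  by rewrite mulf_neq0 ?Gp_al // /M1 /c0 /= hc2 // Ek mem_head.
have := @extract A A' H2 _ _ ga 0 (m - 1) 0 (m - 1) (m - 1) hA eA _ hL hal hga _ _.
rewrite add0n; apply.
-
  rewrite /A'.
  apply: (gi_sub (I := fun B => J (x0 ^+ (m * s.-1 - 1) * (x1 ^+ (m - k) * (x2 * B))))) hB.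
  + by rewrite !mulr0; exact: J0.
  + by move=> B1 B2 h1 h2; rewrite !mulrDr; apply: JD.
  + move=> r B1 h.
    have -> : x0 ^+ (m * s.-1 - 1) * (x1 ^+ (m - k) * (x2 * (r * B1))) =
       r * (x0 ^+ (m * s.-1 - 1) * (x1 ^+ (m - k) * (x2 * B1))) by ring.
    by apply: JM.
  + move=> g [a [b [c [h1 h2 ->]]]].
    have a0 : a = 0%N by lia.
    subst a.
    have -> : x0 ^+ (m * s.-1 - 1) * (x1 ^+ (m - k) * (x2 * mon 0 b c)) =
      mon (m * s.-1 - 1) (m - k + b) (c + 1) by rewrite /mon !exprD expr0 expr1; ring.
    by apply: S_mixed; lia.
- by move=> Z; apply: J_Mon; lia.
apply: J_fat => q /layerY [i hi hq].
have [Rr eG] := Gp_split (fun i => m - predU (pred1 2%N) (pred1 k) i)%N hi.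
rewrite /H2 eG.
have [ei|ne] := eqVneq i 2%N.
  subst i; rewrite /= ?eqxx /=.
  case: (X2 hq) => [[q0' q2]|[q0' q1']].
    exists (A * Rr), (lin (L 2%N)), (lin (M1 Q1)); split.
    - by apply: van_L.
    - by apply: van_M1; right.
    by ring.
  exists (x1 ^+ (m - k).-1 * \prod_(q <- q0 :: r0) lQ q * lin (M1 Q1) * Rr), (lin (L 2%N)), x1.
  split.
  - by apply: van_L.
  - exact: van_x1.
  rewrite /A; have -> : x1 ^+ (m - k) = x1 * x1 ^+ (m - k).-1.
    by rewrite -exprS prednK //; lia.
  by ring.
have [ek|nk] := eqVneq i k.
  subst i; rewrite /= ?eqxx ?orbT /=.
  move: hq; rewrite Ek inE => /orP[/eqP ->|hq].
    exists (A * Rr), (lin (L k)), (lin (M1 Q1)); split.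
    - by apply: van_L; [lia | rewrite Ek mem_head].
    - by apply: van_M1; left.
    by ring.
  have [Rq eq] := @prod_mem _ _ lQ _ _ hq.
  exists (x1 ^+ (m - k) * Rq * lin (M1 Q1) * Rr), (lin (L k)), (lQ q); split.
  - by apply: van_L; [lia | rewrite Ek in_cons hq orbT].
  - exact: van_lQ.
  by rewrite /A eq; ring.
rewrite /= (negPf ne) (negPf nk) subn0.
exists (A * lin (M1 Q1) * Rr), (lin (L i)), (lin (L i)); split; [exact: van_L|exact: van_L|].
by rewrite powm; ring.
Qed.

Lemma S_pure2 : J (mon (m * s.-1 - 1) 0 (m - 1)).
Proof.
have HP1 : on_line ((0, 1, 0) : pt K) P by rewrite on_line010; case: Pc => _ -> _.
have HP2 : has (on_line ((0, 1, 0) : pt K)) (Xs 2%N).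
  case: he2 => q1 hq1 [t [_ [_ [h2 _]]]]; apply/hasP; exists q1 => //.
  by rewrite on_line010 h2 /c1 /= mulr0.
have [k [hk hQ]] := findk nz010 HP1 HP2.
have [Q1 [q0 [r0 [Ek hr0]]]] := split_k hk.
have hc2 Q : Q \in Xs k -> c1 Q != 0 by move=> /hQ; rewrite on_line010.
have [B [hB eP]] := XL_prod (f := lQ) (ga := fun Q => c1 Q) q0 r0 Mon_x2 Mon_x1 (@XL_lQ2 K).
set ga := \prod_(q <- q0 :: r0) c1 q in eP.
have hga : ga != 0.
  rewrite prodf_seq_neq0; apply/allP => Q hQ' /=; rewrite hc2 //.
  by rewrite Ek inE hQ' orbT.
set A := x2 ^+ (m - k) * \prod_(q <- q0 :: r0) lQ q.
set A' := x2 ^+ (m - k) * (x1 * B).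
have eA : A = cst ga * mon 0 0 (m - 1) + A'.
  rewrite /A /A' eP /mon.
  have -> : x2 ^+ (m - 1) = x2 ^+ (m - k) * x2 ^+ (size r0).+1 by rewrite -exprD; congr (_ ^+ _); lia.
  ring.
have hA : Mon (m - 1) (m - 1) A.
  rewrite eA; apply: giD.
    by apply: giM; apply: (Mon_cast _ _ (Mon_mon 0 0 (m - 1))); lia.
  by apply: (Mon_cast _ _ (MonM (Mon_exp (m - k) Mon_x2) (MonM Mon_x1 hB))); lia.
set H2 := lin (M2 Q1) * Gp (fun i => m - predU (pred1 2%N) (pred1 k) i)%N.
have hL : Lead (m * s.-1 - 1) (c0 (M2 Q1) * \prod_(i <- iota 2 s.-1)
     c0 (L i) ^+ (m - predU (pred1 2%N) (pred1 k) i)) H2.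
  by rewrite -(sum2 hk); apply: Lead_mul; [exact: Lead_lin | exact: Gp_lead].
have hal : c0 (M2 Q1) * \prod_(i <- iota 2 s.-1)
     c0 (L i) ^+ (m - predU (pred1 2%N) (pred1 k) i) != 0.
  by rewrite mulf_neq0 ?Gp_al // /M2 /c0 /= hc2 // Ek mem_head.
have := @extract A A' H2 _ _ ga 0 0 (m - 1) (m - 1) (m - 1) hA eA _ hL hal hga _ _.
rewrite add0n; apply.
-
  rewrite /A'.
  apply: (gi_sub (I := fun B => J (x0 ^+ (m * s.-1 - 1) * (x2 ^+ (m - k) * (x1 * B))))) hB.
  + by rewrite !mulr0; exact: J0.
  + by move=> B1 B2 h1 h2; rewrite !mulrDr; apply: JD.
  + move=> r B1 h.
    have -> : x0 ^+ (m * s.-1 - 1) * (x2 ^+ (m - k) * (x1 * (r * B1))) =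
       r * (x0 ^+ (m * s.-1 - 1) * (x2 ^+ (m - k) * (x1 * B1))) by ring.
    by apply: JM.
  + move=> g [a [b [c [h1 h2 ->]]]].
    have a0 : a = 0%N by lia.
    subst a.
    have -> : x0 ^+ (m * s.-1 - 1) * (x2 ^+ (m - k) * (x1 * mon 0 b c)) =
      mon (m * s.-1 - 1) (b + 1) (m - k + c) by rewrite /mon !exprD expr0 expr1; ring.
    by apply: S_mixed; lia.
- by move=> Z; apply: J_Mon; lia.
apply: J_fat => q /layerY [i hi hq].
have [Rr eG] := Gp_split (fun i => m - predU (pred1 2%N) (pred1 k) i)%N hi.
rewrite /H2 eG.
have [ei|ne] := eqVneq i 2%N.
  subst i; rewrite /= ?eqxx /=.
  case: (X2 hq) => [[q0' q2]|[q0' q1']]; last first.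
    exists (A * Rr), (lin (L 2%N)), (lin (M2 Q1)); split.
    - by apply: van_L.
    - by apply: van_M2; right.
    by ring.
  exists (x2 ^+ (m - k).-1 * \prod_(q <- q0 :: r0) lQ q * lin (M2 Q1) * Rr), (lin (L 2%N)), x2.
  split.
  - by apply: van_L.
  - exact: van_x2.
  rewrite /A; have -> : x2 ^+ (m - k) = x2 * x2 ^+ (m - k).-1.
    by rewrite -exprS prednK //; lia.
  by ring.
have [ek|nk] := eqVneq i k.
  subst i; rewrite /= ?eqxx ?orbT /=.
  move: hq; rewrite Ek inE => /orP[/eqP ->|hq].
    exists (A * Rr), (lin (L k)), (lin (M2 Q1)); split.
    - by apply: van_L; [lia | rewrite Ek mem_head].
    - by apply: van_M2; left.
    by ring.
  have [Rq eq] := @prod_mem _ _ lQ _ _ hq.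
  exists (x2 ^+ (m - k) * Rq * lin (M2 Q1) * Rr), (lin (L k)), (lQ q); split.
  - by apply: van_L; [lia | rewrite Ek in_cons hq orbT].
  - exact: van_lQ.
  by rewrite /A eq; ring.
rewrite /= (negPf ne) (negPf nk) subn0.
exists (A * lin (M2 Q1) * Rr), (lin (L i)), (lin (L i)); split; [exact: van_L|exact: van_L|].
by rewrite powm; ring.
Qed.


Lemma S_top a b c : (a + b + c = m * s - 2)%N -> (m - 1 <= b + c)%N -> J (mon a b c).
Proof.
move=> habc hbc; have [hh|hl] := leqP m (b + c); first exact: S_high.
have ea : a = (m * s.-1 - 1)%N by have := hms; lia.
subst a.
have [b0|bpos] := eqVneq b 0%N.
  subst b; have -> : c = (m - 1)%N by lia.
  exact: S_pure2.
have [c0'|cpos] := eqVneq c 0%N.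
  subst c; have -> : b = (m - 1)%N by lia.
  exact: S_pure1.
by apply: S_mixed; lia.
Qed.

Lemma S_down t : (t <= m - 1)%N -> forall a b c, (a + b + c = m * s - 2)%N ->
  (m - 1 - t <= b + c)%N -> J (mon a b c).
Proof.
elim: t => [|t IH] ht a b c habc hbc.
  by apply: S_top => //; lia.
have [hh|hl] := leqP (m - 1 - t) (b + c); first by apply: IH => //; lia.
have hj : (b + c = m - 1 - t.+1)%N by lia.
have hL := Gp_lead (fun i => m - pred0 i)%N.
have hal := Gp_al (fun i => m - pred0 i)%N.
have hsum : (\sum_(i <- iota 2 s.-1) (m - pred0 i) = m * s.-1)%N.
  have := sum_sub pred0 (iota 2 s.-1) hm0.
  by rewrite count_pred0 size_iota addn0.
rewrite hsum in hL.
have ea : a = (m - 2 - (b + c) + m * s.-1)%N by have := hms; have := hms1; lia.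
subst a.
have := @extract (mon (m - 2 - (b + c)) b c) 0 _ _ _ 1 (m - 2 - (b + c)) b c
  (m - 2 - (b + c) + b + c)%N (b + c)%N (Mon_mon _ b c) _ _ hL hal (oner_neq0 _) _ _.
apply.
- by rewrite cst1 mul1r addr0.
- by rewrite mulr0; exact: J0.
- move=> Z; apply: J_gen => g [a' [b' [c' [h1 h2 ->]]]].
  apply: IH; [lia | | lia].
  by have := hms; have := hms1; lia.
apply: J_fat => q /layerY [i hi hq].
have [Rr ->] := Gp_split (fun i => m - pred0 i)%N hi.
rewrite /= subn0.
exists (mon (m - 2 - (b + c)) b c * Rr), (lin (L i)), (lin (L i)).
split; [exact: van_L|exact: van_L|].
by rewrite powm; ring.
Qed.

Lemma S_final (F : R) : homog (m * s - 2) F -> J F.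
Proof.
move=> hF; have := homog_Mon hF; apply: J_gen => g [a [b [c [h1 _ ->]]]].
by apply: (@S_down (m - 1)) => //; lia.
Qed.

End Main.

Theorem mainTheorem14 (K : closedFieldType) (s : nat)
    (Xs : nat -> seq (pt K)) (L : nat -> pt K) (P : pt K) :
  (2 <= s)%N ->
  (* X = X_1 u ... u X_s, consisting of pairwise distinct points *)
  let X := flatten [seq Xs i | i <- iota 1 s] in
  distinct_pts X ->
  (* |X_i| = d_i = i : type (1,2,...,s) *)
  (forall i, (1 <= i <= s)%N -> size (Xs i) = i) ->
  (* the L_i are distinct lines *)
  (forall i, (1 <= i <= s)%N -> nzpt (L i)) ->
  (forall i j, (1 <= i <= s)%N -> (1 <= j <= s)%N -> i <> j -> ~ proj_eq (L i) (L j)) ->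
  (* X_i lies on L_i *)
  (forall i q, (1 <= i <= s)%N -> q \in Xs i -> on_line (L i) q) ->
  (* L_i contains no point of X_j for j < i *)
  (forall i j q, (1 < i <= s)%N -> (1 <= j < i)%N -> q \in Xs j -> ~~ on_line (L i) q) ->
  (* X_1 = {P}, with P = [1:0:0] *)
  Xs 1%N = [:: P] ->
  proj_eq P (1, 0, 0) ->
  (* X_2 = {[0:1:0], [0:0:1]} *)
  (exists2 q, q \in Xs 2%N & proj_eq q (0, 1, 0)) ->
  (exists2 q, q \in Xs 2%N & proj_eq q (0, 0, 1)) ->
  (* no line through P contains s points of X *)
  (forall l : pt K, nzpt l -> on_line l P -> (count (on_line l) X < s)%N) ->
  let Y := flatten [seq Xs i | i <- iota 2 s.-1] in
  forall m : nat, (s + 1 <= m)%N ->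
  forall F : mpoly K, homog (m * s - 2) F ->
    ideal_add (ideal_fat m Y) (ideal_pow (ideal_pt P) m) F.
Proof.
move=> hs X _ hsize _ _ hon hnot hX1 hP he1 he2 hline Y m hm F hF.
exact: (S_final hs hm hsize hon hnot hX1 hP he1 he2 hline hF).
Qed.
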